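(* Let $H>0$, $\beta\in(0,1/2)$, $a>0$, $b>0$, $\eta\in(0,1]$, $D_0>0$, $R_0\ge0$ be constants. If $\eta<1$ let $\delta\in(0,\eta)$ and $\eta^-=\eta-\delta$; if $\eta=1$ let $\eta^-=1$. Then there exist constants $A,B>0$ depending only on $H,\beta,a,b,\eta^-,D_0,R_0$ such that the following holds for every $T>0$. Suppose $x^T,v^T:[0,\infty)\to\mathbb{R}^3$ satisfy \[\dot x^T=v^T(t),\qquad \dot v^T=-a_T(x^T,t)\,v^T(t)+\varepsilon_T(t),\qquad t\ge0,\] where the scalar coefficient satisfies $a_T(x,t)\ge H/(1+|x|^2)^{\beta}$, the perturbation $\varepsilon_T(t)\in\mathbb{R}^3$ satisfies $|\varepsilon_T(t)|\le a\,e^{-b(t+T)^{\eta}}$ for all $t\ge0$, and $|v^T(t)|\le D_0$ for all $t\ge0$ and $|x^T(0)|\le R_0+D_0T$. Then \[|v^T(T)|\le A\,e^{-B\,T^{\min(1-2\beta,\ \eta^-)}}.\] *)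

(* Defs.v *)
(* Stdlib reals. Vectors of R^3 are represented as functions
   nat -> R, of which only the components 0, 1, 2 are used. *)
From Stdlib Require Export Reals.
Open Scope R_scope.

Definition norm3 (p : nat -> R) : R :=
  sqrt (p 0%nat ^ 2 + p 1%nat ^ 2 + p 2%nat ^ 2).

Definition deriv_on_nonneg (f f' : R -> R) : Prop :=
  forall t, 0 <= t ->
    forall eps, 0 < eps -> exists del, 0 < del /\
      forall h, h <> 0 -> Rabs h < del -> 0 <= t + h ->
        Rabs ((f (t + h) - f t) / h - f' t) < eps.

Definition eta_minus (eta delta : R) : R :=
  if Rlt_dec eta 1 then eta - delta else 1.

(* Main.v *)
Require Import Defs.
From Stdlib Require Import Reals Lra Psatz FunctionalExtensionality.
Open Scope R_scope.

Lemma exp_le' x y : x <= y -> exp x <= exp y.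
Proof. intros [H|H]; [left; apply exp_increasing; auto | subst; lra]. Qed.

Lemma ln_le' x y : 0 < x -> x <= y -> ln x <= ln y.
Proof. intros Hx [H|H]; [left; apply ln_increasing; auto | subst; lra]. Qed.

Lemma comp_le_norm (p : nat -> R) i : (i < 3)%nat -> Rabs (p i) <= norm3 p.
Proof.
  intros Hi. unfold norm3. rewrite <- (sqrt_pow2 (Rabs (p i))) by apply Rabs_pos.
  apply sqrt_le_1_alt. rewrite pow2_abs.
  assert (0 <= p 0%nat ^2 /\ 0 <= p 1%nat ^2 /\ 0 <= p 2%nat ^2) by (repeat split; nra).
  destruct i as [|[|[|i]]]; try lia; lra.
Qed.

Lemma norm_le_sum (p : nat -> R) : norm3 p <= Rabs (p 0%nat) + Rabs (p 1%nat) + Rabs (p 2%nat).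
Proof.
  unfold norm3. rewrite <- (sqrt_pow2 (Rabs (p 0%nat) + Rabs (p 1%nat) + Rabs (p 2%nat))).
  2: { pose proof (Rabs_pos (p 0%nat)); pose proof (Rabs_pos (p 1%nat)); pose proof (Rabs_pos (p 2%nat)); lra. }
  apply sqrt_le_1_alt.
  rewrite <- (pow2_abs (p 0%nat)), <- (pow2_abs (p 1%nat)), <- (pow2_abs (p 2%nat)).
  pose proof (Rabs_pos (p 0%nat)); pose proof (Rabs_pos (p 1%nat)); pose proof (Rabs_pos (p 2%nat)); nra.
Qed.

Lemma dnn_lim (f f' : R -> R) t : deriv_on_nonneg f f' -> 0 < t -> derivable_pt_lim f t (f' t).
Proof.
  intros Hd Ht eps He. destruct (Hd t (Rlt_le _ _ Ht) eps He) as [del [Hdel H]].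
  exists (mkposreal (Rmin del t) (Rmin_pos _ _ Hdel Ht)). simpl. intros h Hh Hlt.
  apply H; auto.
  - pose proof (Rmin_l del t); lra.
  - pose proof (Rmin_r del t). apply Rabs_def2 in Hlt. lra.
Qed.

Lemma comp_bound (f f' : R -> R) D : deriv_on_nonneg f f' -> 0 <= D ->
  (forall t, 0 <= t -> Rabs (f' t) <= D) ->
  forall t, 0 < t -> Rabs (f t) <= Rabs (f 0) + 1 + D * t.
Proof.
  intros Hd HD Hb t Ht.
  destruct (Hd 0 (Rle_refl 0) 1 Rlt_0_1) as [del [Hdel H]].
  set (s := Rmin (del/2) (Rmin (t/2) (1/(2*(D+1))))).
  assert (Hs1 : s <= del/2) by apply Rmin_l.
  assert (Hs2 : s <= t/2) by (eapply Rle_trans; [apply Rmin_r| apply Rmin_l]).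
  assert (Hs3 : s <= 1/(2*(D+1))) by (eapply Rle_trans; [apply Rmin_r| apply Rmin_r]).
  assert (Hs0 : 0 < s).
  { apply Rmin_pos; [lra|apply Rmin_pos; [lra| apply Rdiv_lt_0_compat; lra]]. }
  assert (Hfs : Rabs (f s - f 0) <= 1).
  { specialize (H s ltac:(lra) ltac:(rewrite Rabs_pos_eq; lra) ltac:(lra)).
    rewrite Rplus_0_l in H.
    pose proof (Hb 0 (Rle_refl 0)).
    assert (Hq : Rabs ((f s - f 0) / s) <= D + 1).
    { pose proof (Rabs_triang_inv ((f s - f 0) / s) (f' 0)). lra. }
    replace (f s - f 0) with (((f s - f 0) / s) * s) by (field; lra).
    rewrite Rabs_mult, (Rabs_pos_eq s) by lra.
    assert (s * (D+1) <= 1/2).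
    { apply Rmult_le_compat_r with (r := D+1) in Hs3; [|lra].
      replace (1 / (2 * (D + 1)) * (D + 1)) with (1/2) in Hs3 by (field; lra). lra. }
    pose proof (Rabs_pos ((f s - f 0) / s)). nra. }
  destruct (MVT_cor2 f f' s t ltac:(lra)) as [c [Hc1 Hc2]].
  { intros c Hc. apply dnn_lim; auto; lra. }
  assert (Rabs (f t - f s) <= D * t).
  { rewrite Hc1, Rabs_mult, (Rabs_pos_eq (t - s)) by lra.
    pose proof (Hb c ltac:(lra)). pose proof (Rabs_pos (f' c)). nra. }
  pose proof (Rabs_triang (f t - f s) (f s - f 0)).
  pose proof (Rabs_triang (f t - f s + (f s - f 0)) (f 0)).
  replace (f t - f s + (f s - f 0) + f 0) with (f t) in H2 by ring.
  lra.
Qed.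

Lemma sq_lim f c l : derivable_pt_lim f c l -> derivable_pt_lim (fun t => f t ^ 2) c (2 * f c * l).
Proof.
  intros H. replace (fun t => f t ^ 2) with (mult_fct f f) by (extensionality t; unfold mult_fct; ring).
  replace (2 * f c * l) with (l * f c + f c * l) by ring. apply derivable_pt_lim_mult; auto.
Qed.

Lemma sum3_lim f g h c l1 l2 l3 : derivable_pt_lim f c l1 -> derivable_pt_lim g c l2 -> derivable_pt_lim h c l3 ->
  derivable_pt_lim (fun t => f t + g t + h t) c (l1 + l2 + l3).
Proof.
  intros. change (derivable_pt_lim (plus_fct (plus_fct f g) h) c (l1 + l2 + l3)).
  apply derivable_pt_lim_plus; auto. apply derivable_pt_lim_plus; auto.
Qed.

Lemma expl_lim al c : derivable_pt_lim (fun t => exp (2 * al * t)) c (exp (2 * al * c) * (2 * al)).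
Proof.
  change (derivable_pt_lim (comp exp (mult_real_fct (2*al) id)) c (exp (2 * al * c) * (2 * al))).
  apply derivable_pt_lim_comp.
  - replace (2*al) with (2*al*1) at 2 by ring. apply derivable_pt_lim_scal, derivable_pt_lim_id.
  - apply derivable_pt_lim_exp.
Qed.

Lemma lim_eq f c l l' : derivable_pt_lim f c l -> l = l' -> derivable_pt_lim f c l'.
Proof. intros; subst; auto. Qed.

Lemma gronwall (E E' : R -> R) (al K T0 T1 : R) : 0 < al -> T0 < T1 ->
  (forall c, T0 <= c <= T1 -> derivable_pt_lim E c (E' c)) ->
  (forall c, T0 <= c <= T1 -> E' c <= -2*al*E c + K) ->
  exp (2*al*T1) * (E T1 - K/(2*al)) <= exp (2*al*T0) * (E T0 - K/(2*al)).
Proof.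
  intros Hal HT Hd Hb.
  set (g := fun t => exp (2*al*t) * (E t - K/(2*al))).
  set (g' := fun t => exp (2*al*t) * (2*al) * (E t - K/(2*al)) + exp (2*al*t) * E' t).
  destruct (MVT_cor2 g g' T0 T1 HT) as [c [Hc1 Hc2]].
  { intros c Hc. unfold g, g'.
    change (derivable_pt_lim (mult_fct (fun t => exp (2*al*t)) (minus_fct E (fct_cte (K/(2*al))))) c
      (exp (2*al*c) * (2*al) * (E c - K/(2*al)) + exp (2*al*c) * E' c)).
    eapply lim_eq; [eapply derivable_pt_lim_mult; [apply expl_lim|];
      apply derivable_pt_lim_minus; [apply Hd; lra| apply derivable_pt_lim_const]|].
    unfold minus_fct, fct_cte. ring. }
  assert (g' c <= 0).
  { unfold g'. pose proof (exp_pos (2*al*c)). pose proof (Hb c ltac:(lra)).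
    replace (exp (2 * al * c) * (2 * al) * (E c - K / (2 * al)) + exp (2 * al * c) * E' c)
      with (exp (2 * al * c) * (2 * al * E c - K + E' c)) by (field; lra).
    assert (2 * al * E c - K + E' c <= 0) by lra. nra. }
  unfold g in Hc1. nra.
Qed.

Lemma exp_sq_lb y : 0 <= y -> y ^ 2 / 4 <= exp y.
Proof.
  intros Hy. assert (E : exp y = exp (y/2) * exp (y/2)) by (rewrite <- exp_plus; f_equal; field). rewrite E.
  pose proof (exp_ineq1_le (y/2)). nra.
Qed.

Lemma quad_bound c d L : 0 < d -> c * L - d * L ^ 2 <= c ^ 2 / (4 * d).
Proof.
  intros Hd. assert (0 <= (c - 2*d*L)^2 / (4*d)).
  { unfold Rdiv; apply Rmult_le_pos; [apply pow2_ge_0| left; apply Rinv_0_lt_compat; lra]. }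
  replace ((c - 2*d*L)^2 / (4*d)) with (c ^ 2 / (4 * d) - (c * L - d * L ^ 2)) in H by (field; lra).
  lra.
Qed.

Theorem lemma3 :
  forall (H beta a b eta delta D0 R0 : R),
    0 < H -> 0 < beta < 1/2 -> 0 < a -> 0 < b -> 0 < eta <= 1 ->
    (eta < 1 -> 0 < delta < eta) -> 0 < D0 -> 0 <= R0 ->
    exists A B : R, 0 < A /\ 0 < B /\
      forall (T : R), 0 < T ->
      forall (x v eps : nat -> R -> R) (aT : (nat -> R) -> R -> R),
        (* the scalar coefficient bound *)
        (forall (y : nat -> R) (t : R), 0 <= t ->
           aT y t >= H / Rpower (1 + norm3 y ^ 2) beta) ->
        (* the ODE system on [0, +oo), componentwise *)
        (forall i : nat, (i < 3)%nat ->
           deriv_on_nonneg (x i) (v i) /\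
           deriv_on_nonneg (v i)
             (fun t => - aT (fun j => x j t) t * v i t + eps i t)) ->
        (* perturbation bound *)
        (forall t, 0 <= t ->
           norm3 (fun j => eps j t) <= a * exp (- b * Rpower (t + T) eta)) ->
        (* velocity bound and initial position bound *)
        (forall t, 0 <= t -> norm3 (fun j => v j t) <= D0) ->
        norm3 (fun j => x j 0) <= R0 + D0 * T ->
        norm3 (fun j => v j T)
          <= A * exp (- B * Rpower T (Rmin (1 - 2 * beta) (eta_minus eta delta))).
Proof.
  intros H beta a b eta delta D0 R0 HH Hbe Ha Hb Heta Hdel HD0 HR0.
  set (gam := Rmin (1 - 2 * beta) (eta_minus eta delta)).
  assert (Hg1 : gam <= 1 - 2*beta) by apply Rmin_l.
  assert (Hg2 : gam <= eta).
  { eapply Rle_trans; [apply Rmin_r|]. unfold eta_minus.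
    destruct (Rlt_dec eta 1) as [h|h]; [specialize (Hdel h)|]; lra. }
  assert (Hg0 : 0 <= gam).
  { apply Rmin_glb; [lra|]. unfold eta_minus.
    destruct (Rlt_dec eta 1) as [h|h]; [specialize (Hdel h)|]; lra. }
  set (C := 1 + 9 * (R0 + 1 + 2 * D0) ^ 2).
  assert (HC : 1 <= C) by (unfold C; nra).
  set (c1 := H * exp (- (beta * ln C))).
  assert (Hc1 : 0 < c1) by (unfold c1; pose proof (exp_pos (- (beta * ln C))); nra).
  set (B := Rmin (b/4) (c1/2)).
  assert (HB0 : 0 < B) by (apply Rmin_pos; lra).
  assert (HB1 : B <= b/4) by apply Rmin_l.
  assert (HB2 : B <= c1/2) by apply Rmin_r.
  set (Q := 8 * beta ^ 2 / (b * eta ^ 2)).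
  set (A' := D0 ^ 2 + 3 * D0 * a / H * exp (beta * ln C) * exp Q).
  assert (HA' : 0 < A').
  { unfold A'. pose proof (exp_pos (beta * ln C)). pose proof (exp_pos Q).
    assert (0 < 3 * D0 * a / H) by (apply Rdiv_lt_0_compat; nra). 
    assert (0 < 3 * D0 * a / H * exp (beta * ln C) * exp Q) by (apply Rmult_lt_0_compat; [apply Rmult_lt_0_compat|]; auto).
    nra. }
  exists (sqrt A' + D0 * exp B), B.
  assert (HsA : 0 < sqrt A') by (apply sqrt_lt_R0; auto).
  pose proof (exp_pos B).
  split; [nra|]. split; [auto|].
  intros T HT x v eps aT Ha' Hode Heps Hv Hx0.
  fold gam.
  assert (Hvi : forall i t, (i < 3)%nat -> 0 <= t -> Rabs (v i t) <= D0).
  { intros i t Hi Ht. eapply Rle_trans; [apply (comp_le_norm (fun j => v j t) i Hi)| auto]. }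
  destruct (Rle_lt_dec T 1) as [HT1|HT1].
  -
    assert (Hr : Rpower T gam <= 1).
    { unfold Rpower. rewrite <- exp_0. apply exp_le'.
      assert (ln T <= 0) by (rewrite <- ln_1; apply ln_le'; auto). nra. }
    pose proof (Hv T (Rlt_le _ _ HT)).
    assert (D0 <= D0 * exp B * exp (- B * Rpower T gam)).
    { rewrite Rmult_assoc, <- exp_plus.
      assert (1 <= exp (B + - B * Rpower T gam)).
      { rewrite <- exp_0. apply exp_le'. nra. }
      nra. }
    pose proof (exp_pos (- B * Rpower T gam)). nra.
  -
    set (L := ln T).
    assert (HL : 0 < L) by (unfold L; rewrite <- ln_1; apply ln_increasing; lra).
    assert (HTL : T = exp L) by (unfold L; rewrite exp_ln; lra).
    set (M := 3 * (R0 + 1 + 2 * D0 * T)).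
    assert (Hx : forall t, 0 < t <= T -> norm3 (fun j => x j t) <= M).
    { intros t Ht. eapply Rle_trans; [apply norm_le_sum|].
      assert (Hc : forall i, (i < 3)%nat -> Rabs (x i t) <= R0 + 1 + 2 * D0 * T).
      { intros i Hi. destruct (Hode i Hi) as [Hd1 _].
        pose proof (comp_bound (x i) (v i) D0 Hd1 ltac:(lra) (fun t Ht => Hvi i t Hi Ht) t ltac:(lra)).
        pose proof (comp_le_norm (fun j => x j 0) i Hi). simpl in H1.
        nra. }
      pose proof (Hc 0%nat ltac:(lia)). pose proof (Hc 1%nat ltac:(lia)). pose proof (Hc 2%nat ltac:(lia)).
      unfold M. lra. }
    set (al := H * exp (- (beta * ln C) - 2 * beta * L)).
    assert (Hal : 0 < al) by (unfold al; pose proof (exp_pos (- (beta * ln C) - 2 * beta * L)); nra).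
    assert (HaT : forall t, 0 < t <= T -> al <= aT (fun j => x j t) t).
    { intros t Ht. pose proof (Ha' (fun j => x j t) t ltac:(lra)) as Hat.
      set (n := norm3 (fun j => x j t)) in *.
      assert (Hn0 : 0 <= n) by (unfold n, norm3; apply sqrt_pos).
      assert (HnM : n <= M) by (apply Hx; auto).
      assert (Hn : 1 + n ^ 2 <= C * (T * T)).
      { assert (M <= 3 * (R0 + 1 + 2 * D0) * T) by (unfold M; nra).
        assert (0 <= M) by (unfold M; nra).
        unfold C. nra. }
      assert (Hln : ln (1 + n ^ 2) <= ln C + 2 * L).
      { replace (ln C + 2 * L) with (ln (C * (T * T))).
        - apply ln_le'; [nra| auto].
        - rewrite !ln_mult by nra. unfold L. ring. }
      unfold Rpower in Hat. unfold Rdiv in Hat. rewrite <- exp_Ropp in Hat.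
      unfold al. apply Rge_le in Hat. eapply Rle_trans; [|apply Hat].
      apply Rmult_le_compat_l; [lra|]. apply exp_le'. nra. }
    set (E := fun t => v 0%nat t ^ 2 + v 1%nat t ^ 2 + v 2%nat t ^ 2).
    set (w := fun i t => - aT (fun j => x j t) t * v i t + eps i t).
    set (E' := fun t => 2 * v 0%nat t * w 0%nat t + 2 * v 1%nat t * w 1%nat t + 2 * v 2%nat t * w 2%nat t).
    assert (HEn : forall t, norm3 (fun j => v j t) = sqrt (E t)) by reflexivity.
    assert (HE0 : forall t, 0 <= E t) by (intros; unfold E; nra).
    assert (HED : forall t, 0 <= t -> E t <= D0 ^ 2).
    { intros t Ht. pose proof (Hv t Ht) as Hvt. rewrite HEn in Hvt.
      rewrite <- (pow2_sqrt (E t)) by auto. pose proof (sqrt_pos (E t)). nra. }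
    set (k := exp (- b * exp (eta * L))).
    set (K := 6 * D0 * a * k).
    assert (Hk : 0 < k) by apply exp_pos.
    assert (Hgr := gronwall E E' al K (T/2) T Hal ltac:(lra)).
    assert (Hgr' : exp (2 * al * T) * (E T - K / (2 * al)) <= exp (2 * al * (T / 2)) * (E (T / 2) - K / (2 * al))).
    { apply Hgr.
      - intros c Hc. unfold E, E'.
        assert (Hvd : forall i, (i < 3)%nat -> derivable_pt_lim (v i) c (w i c)).
        { intros i Hi. unfold w.
          apply (dnn_lim (v i) (fun t => - aT (fun j => x j t) t * v i t + eps i t) c);
            [apply Hode; auto| lra]. }
        apply sum3_lim; apply sq_lim; apply Hvd; lia.
      - intros c Hc. unfold E', w.
        pose proof (HaT c ltac:(lra)).
        assert (Hek : norm3 (fun j => eps j c) <= a * k).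
        { eapply Rle_trans; [apply Heps; lra|]. apply Rmult_le_compat_l; [lra|].
          unfold k. apply exp_le'. unfold Rpower.
          assert (exp (eta * L) <= exp (eta * ln (c + T))).
          { apply exp_le'. apply Rmult_le_compat_l; [lra|]. apply ln_le'; lra. }
          nra. }
        assert (Hve : forall i, (i < 3)%nat -> v i c * eps i c <= D0 * (a * k)).
        { intros i Hi. eapply Rle_trans; [apply Rle_abs|]. rewrite Rabs_mult.
          apply Rmult_le_compat; try apply Rabs_pos; [apply Hvi; auto; lra|].
          eapply Rle_trans; [apply (comp_le_norm (fun j => eps j c) i Hi)|auto]. }
        pose proof (Hve 0%nat ltac:(lia)). pose proof (Hve 1%nat ltac:(lia)). pose proof (Hve 2%nat ltac:(lia)).
        pose proof (HE0 c). unfold E in H4 |- *. unfold K. nra. }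
    clear Hgr.
    set (P := exp (al * T)).
    assert (HP : 0 < P) by apply exp_pos.
    assert (HP2 : exp (2 * al * T) = P * P) by (unfold P; rewrite <- exp_plus; f_equal; ring).
    assert (HP1 : exp (2 * al * (T / 2)) = P) by (unfold P; f_equal; field).
    rewrite HP2, HP1 in Hgr'.
    set (Kp := K / (2 * al)) in *.
    assert (HKp : 0 <= Kp).
    { unfold Kp, K. assert (0 < 6 * D0 * a * k) by (repeat apply Rmult_lt_0_compat; lra).
      apply Rlt_le, Rdiv_lt_0_compat; lra. }
    pose proof (HED (T/2) ltac:(lra)) as HE2.
    assert (HET : E T <= D0 ^ 2 * / P + Kp).
    { assert (P * (E T - Kp) <= D0 ^ 2) by nra.
      assert (E T - Kp <= D0 ^ 2 * / P).
      { apply (Rmult_le_reg_l P); auto. rewrite <- Rmult_assoc, (Rmult_comm P (D0^2)), Rmult_assoc, Rinv_r; lra. }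
      lra. }
    set (X := exp (- 2 * B * exp (gam * L))).
    assert (Hi : / P <= X).
    { unfold P, X. rewrite <- exp_Ropp. apply exp_le'.
      assert (Hat : al * T = c1 * exp ((1 - 2 * beta) * L)).
      { unfold al, c1. rewrite HTL at 1. rewrite !Rmult_assoc. rewrite <- !exp_plus. do 2 f_equal. ring. }
      rewrite Hat.
      assert (exp (gam * L) <= exp ((1 - 2 * beta) * L)) by (apply exp_le'; nra).
      pose proof (exp_pos (gam * L)). nra. }
    assert (Hii : Kp <= 3 * D0 * a / H * exp (beta * ln C) * exp Q * X).
    { assert (HKe : Kp = 3 * D0 * a / H * (k * exp (beta * ln C + 2 * beta * L))).
      { unfold Kp, K, al. replace (beta * ln C + 2 * beta * L) with (- (- (beta * ln C) - 2 * beta * L)) by ring.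
        rewrite exp_Ropp. pose proof (exp_pos (- (beta * ln C) - 2 * beta * L)). field. split; apply Rgt_not_eq; lra. }
      rewrite HKe. rewrite !Rmult_assoc. apply Rmult_le_compat_l.
      { unfold Rdiv. apply Rmult_le_pos; [nra| left; apply Rinv_0_lt_compat; lra]. }
      unfold k, X. rewrite <- !exp_plus. apply exp_le'.
      assert (Hgl : exp (gam * L) <= exp (eta * L)) by (apply exp_le'; nra).
      pose proof (exp_sq_lb (eta * L) ltac:(nra)) as Hsq.
      pose proof (quad_bound (2 * beta) (b * eta ^ 2 / 8) L ltac:(assert (0 < eta ^ 2) by nra; unfold Rdiv; nra)) as Hq.
      assert (HQ : (2 * beta) ^ 2 / (4 * (b * eta ^ 2 / 8)) = Q).
      { unfold Q. field. split; nra. }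
      rewrite HQ in Hq.
      pose proof (exp_pos (gam * L)).
      assert (b * exp (eta * L) >= b * ((eta * L) ^ 2 / 4)) by nra.
      nra. }
    assert (HETX : E T <= A' * X).
    { unfold A'. assert (0 <= X) by (left; apply exp_pos). nra. }
    set (Y := exp (- B * exp (gam * L))).
    assert (HXY : X = Y * Y) by (unfold X, Y; rewrite <- exp_plus; f_equal; ring).
    rewrite HEn. unfold Rpower. fold L. fold Y.
    assert (sqrt (E T) <= sqrt A' * Y).
    { rewrite <- (sqrt_square Y) by (left; apply exp_pos).
      rewrite <- sqrt_mult by (try lra; left; apply Rmult_lt_0_compat; apply exp_pos).
      apply sqrt_le_1_alt. rewrite <- HXY. auto. }
    assert (0 < Y) by apply exp_pos.
    pose proof (exp_pos B). assert (0 <= D0 * exp B * Y) by (apply Rmult_le_pos; [apply Rmult_le_pos|]; lra). rewrite Rmult_plus_distr_r. lra.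
Qed.
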